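(* Let $\Delta\subset\mathbb{R}^n_{\ge0}$ be a Newton polyhedron with a loose edge $E$ whose endpoints are $a,b\in\mathbb{R}^n_{\ge0}$. Then for every $c\in\Delta$ and every $\xi\in\mathbb{R}^n_{\ge0}$ with $\langle\xi,a\rangle=\langle\xi,b\rangle$ one has $\langle\xi,c\rangle\ge\langle\xi,a\rangle$.
   Context: A Newton polyhedron is a set of the form $\mathrm{conv}(S)+\mathbb{R}^n_{\ge0}$ (convex hull of $S+\mathbb{R}^n_{\ge0}$) for a nonempty finite set $S\subset\mathbb{Z}^n_{\ge0}$. For $\xi\in\mathbb{R}^n_{\ge0}$, the face $\Delta^\xi=\{a\in\Delta:\langle\xi,a\rangle=\min_{b\in\Delta}\langle\xi,b\rangle\}$; it is compact iff $\xi\in\mathbb{R}^n_{>0}$. An edge is a face of dimension 1; a loose edge is a compact edge not contained in any compact face of dimension $\ge2$. *)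

(* Defs.v *)
From HB Require Import structures.
From mathcomp Require Import all_boot all_order all_algebra.
From mathcomp Require Import all_classical all_reals all_analysis.
Set Implicit Arguments. Unset Strict Implicit. Unset Printing Implicit Defensive.
Import Order.TTheory GRing.Theory Num.Theory.
Import numFieldNormedType.Exports.
Local Open Scope ring_scope.
Local Open Scope classical_set_scope.

Section Newton.
Variables (R : realType) (n : nat).
Notation pt := ('I_n -> R).

Definition dot (x y : pt) : R := \sum_(i < n) x i * y i.

Definition nonneg (x : pt) : Prop := forall i, 0 <= x i.

Definition conv_seq (S : seq pt) : set pt :=
  [set x | exists l : 'I_(size S) -> R,
     (forall j, 0 <= l j) /\ \sum_(j < size S) l j = 1 /\
     forall i, x i = \sum_(j < size S) l j * (nth (fun _ => 0) S j) i].

Definition newton_of (S : seq ('I_n -> nat)) : set pt :=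
  [set x | exists2 y, conv_seq [seq (fun i => (s i)%:R) | s <- S] y &
           forall i, y i <= x i].

Definition newton_polyhedron (D : set pt) : Prop :=
  exists S : seq ('I_n -> nat), S != [::] /\ D = newton_of S.

Definition face (D : set pt) (xi : pt) : set pt :=
  [set a | D a /\ forall b, D b -> dot xi a <= dot xi b].

Definition is_face (D F : set pt) : Prop :=
  exists2 xi, nonneg xi & F = face D xi.

(* k+1 affinely independent points of F  <=>  dim F >= k *)
Definition affinely_independent k (p : 'I_k.+1 -> pt) : Prop :=
  forall c : 'I_k.+1 -> R,
    (forall i, \sum_(j < k.+1) c j * (p j i - p ord0 i) = 0) ->
    forall j, j != ord0 -> c j = 0.

Definition dim_ge (F : set pt) (k : nat) : Prop :=
  exists p : 'I_k.+1 -> pt, (forall j, F (p j)) /\ affinely_independent p.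

Definition is_compact_face (D F : set pt) : Prop :=
  is_face D F /\ @compact (@prod_topology 'I_n (fun _ => (R : topologicalType))) F.
(* compactness w.r.t. the product (= Euclidean) topology on R^n *)

Definition is_edge (D E : set pt) : Prop :=
  is_face D E /\ dim_ge E 1 /\ ~ dim_ge E 2.

Definition loose_edge (D E : set pt) : Prop :=
  is_compact_face D E /\ is_edge D E /\
  ~ (exists F, is_compact_face D F /\ dim_ge F 2 /\ E `<=` F).

Definition segment (a b : pt) : set pt :=
  [set x | exists2 t : R, 0 <= t <= 1 & forall i, x i = (1 - t) * a i + t * b i].

End Newton.

(* Main.v *)
Require Import Defs.
From HB Require Import structures.
From mathcomp Require Import all_boot all_order all_algebra.
From mathcomp Require Import all_classical all_reals all_analysis.
From mathcomp Require Import ring lra.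
Set Implicit Arguments. Unset Strict Implicit. Unset Printing Implicit Defensive.
Import Order.TTheory GRing.Theory Num.Theory.
Import numFieldNormedType.Exports.
Local Open Scope ring_scope.
Local Open Scope classical_set_scope.

Section Geo.
Variables (R : realType) (n : nat).
Local Notation pt := ('I_n -> R).

Definition Pts (S : seq ('I_n -> nat)) : seq pt := [seq (fun i => (s i)%:R) | s <- S].

Definition Lmap (P : seq pt) (l : 'I_(size P) -> R) : pt :=
  fun i => \sum_(j < size P) l j * (nth (fun _ => 0) P j) i.
Arguments Lmap : clear implicits.

Lemma dot_lin_l (x y z : pt) t :
  dot (fun i => x i + t * y i) z = dot x z + t * dot y z.
Proof.
rewrite /dot mulr_sumr -big_split; apply: eq_bigr => i _ /=; ring.
Qed.

Lemma dot_seg (xi a b x : pt) t :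
  (forall i, x i = (1 - t) * a i + t * b i) ->
  dot xi x = (1 - t) * dot xi a + t * dot xi b.
Proof.
move=> hx; rewrite /dot !mulr_sumr -big_split; apply: eq_bigr => i _ /=.
rewrite hx; ring.
Qed.

Lemma dot_le (xi x y : pt) : nonneg xi -> (forall i, y i <= x i) ->
  dot xi y <= dot xi x.
Proof.
move=> nn h; rewrite /dot; apply: ler_sum => i _; apply: ler_wpM2l => //.
Qed.

Lemma dot_Lmap (xi : pt) P l :
  dot xi (Lmap P l) = \sum_(j < size P) l j * dot xi (nth (fun _ => 0) P j).
Proof.
rewrite /dot /Lmap.
under eq_bigr do rewrite mulr_sumr.
rewrite exchange_big; apply: eq_bigr => j _; rewrite mulr_sumr.
by apply: eq_bigr => i _; ring.
Qed.

Lemma dot_lin3 (xi a b v : pt) c1 c2 :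
  dot xi (fun i => c1 * (b i - a i) + c2 * (v i - a i)) =
  c1 * (dot xi b - dot xi a) + c2 * (dot xi v - dot xi a).
Proof.
rewrite /dot -!sumrB !mulr_sumr -big_split; apply: eq_bigr => i _ /=; ring.
Qed.

Lemma sum_delta m (j : 'I_m) (f : 'I_m -> R) :
  \sum_(k < m) (k == j)%:R * f k = f j.
Proof.
rewrite (bigD1 j) //= eqxx mul1r big1 ?addr0 // => k /negbTE ->.
by rewrite mul0r.
Qed.

Lemma newton_lb (S : seq ('I_n -> nat)) (xi x : pt) beta :
  newton_of S x -> nonneg xi ->
  (forall j : 'I_(size (Pts S)), beta <= dot xi (nth (fun _ => 0) (Pts S) j)) ->
  beta <= dot xi x.
Proof.
set P := Pts S => -[y [l [l0 [l1 ly]]] yx] nn hb.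
have hyx := dot_le nn yx; apply: (le_trans _ hyx); clear hyx.
have -> : dot xi y = dot xi (Lmap P l).
  by rewrite /dot; apply: eq_bigr => i _; rewrite ly.
rewrite dot_Lmap.
have -> : beta = \sum_(j < size P) l j * beta by rewrite -mulr_suml l1 mul1r.
by apply: ler_sum => j _; apply: ler_wpM2l.
Qed.

Lemma newton_pt (S : seq ('I_n -> nat)) (j : 'I_(size (Pts S))) :
  newton_of S (nth (fun _ => 0) (Pts S) j).
Proof.
exists (nth (fun _ => 0) (Pts S) j) => //.
exists (fun k => (k == j)%:R); split; first by move=> k; rewrite ler0n.
split; first by rewrite (eq_bigr (fun k => (k == j)%:R * 1)) ?sum_delta // => k _; rewrite mulr1.
by move=> i; rewrite sum_delta.
Qed.

End Geo.

Section Top.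
Variable R : realType.
Local Notation PT k := (@prod_topology 'I_k (fun _ => (R : topologicalType))).

Lemma cont_lin_seq k (w : 'I_k -> R) (r : seq 'I_k) :
  continuous (fun l : PT k => \sum_(j <- r) l j * w j).
Proof.
elim: r => [|j r IH].
  have -> : (fun l : PT k => \sum_(j <- [::]) l j * w j) = (fun _ => 0).
    by apply: funext => l; rewrite big_nil.
  exact: cst_continuous.
have -> : (fun l : PT k => \sum_(i <- j :: r) l i * w i) =
   ((fun l : PT k => l j * w j) + (fun l : PT k => \sum_(i <- r) l i * w i)).
  by apply: funext => l; rewrite big_cons.
move=> x; apply: continuousD; last exact: IH.
apply: (@continuousM R (PT k) (fun l : PT k => l j) (fun _ => w j)).
  exact: (@proj_continuous 'I_k (fun _ => (R : topologicalType)) j).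
exact: cst_continuous.
Qed.

Lemma cont_lin k (w : 'I_k -> R) :
  continuous (fun l : PT k => \sum_(j < k) l j * w j).
Proof. exact: cont_lin_seq. Qed.

Lemma cont_into_prod (X : topologicalType) k (f : X -> PT k) :
  (forall i, continuous (fun x => f x i)) -> continuous f.
Proof.
move=> H x.
apply/cvg_sup => i.
apply: (@continuous_comp_initial _ _ _ (fun g : 'I_k -> R => g i)).
exact: H.
Qed.

Lemma argmin_ex (I : finType) (P : pred I) (f : I -> R) i0 :
  P i0 -> exists2 i, P i & forall k, P k -> f i <= f k.
Proof.
move=> Pi0; case: (arg_minP f Pi0) => i Pi H; by exists i.
Qed.

Lemma boxc k : @compact (PT k) [set l | forall j, `[(0:R), 1]%classic (l j)].
Proof. exact: (@tychonoff _ (fun _ => (R : topologicalType)) (fun _ => `[(0:R), 1]%classic) (fun _ => @segment_compact R 0 1)). Qed.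

Lemma inbox (x : R) : `[(0:R), 1]%classic x <-> 0 <= x <= 1.
Proof. by rewrite /= in_itv. Qed.
End Top.

Arguments Lmap {R n} P l _.
Arguments Pts {R n} S.

Theorem lemma2p1 (R : realType) (n : nat) (D E : set ('I_n -> R))
    (a b : 'I_n -> R) :
  newton_polyhedron D -> loose_edge D E -> E = segment a b ->
  forall c xi, D c -> nonneg xi -> dot xi a = dot xi b ->
  dot xi a <= dot xi c.
Proof.
move=> hN hL Eseg; subst E.
case: hN => S [Sne DS]; subst D.
case: hL => [[hF cE] [[_ [dimE1 _]] noF]]; case: hF => xi0 nn0 EF; move=> c xi Dc nnxi hab.
have Ea : segment a b a.
  by exists 0 => [|i]; [rewrite lexx ler01 | rewrite subr0 mul1r mul0r addr0].
have Eb : segment a b b.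
  by exists 1 => [|i]; [rewrite lexx ler01 | rewrite subrr mul0r mul1r add0r].
have [Da mina] : face (newton_of S) xi0 a by rewrite -EF.
have [Db minb] : face (newton_of S) xi0 b by rewrite -EF.
set mu0 := dot xi0 a.
have pos0 : forall i, 0 < xi0 i.
  move=> i; rewrite lt_neqAle nn0 andbT; apply/negP => /eqP hi0.
  pose T : R := `|b i - a i| + 1.
  pose x := fun k => a k + (if k == i then T else 0).
  have dx : forall z, dot z x = dot z a + z i * T.
    move=> z; rewrite /dot /x.
    rewrite (eq_bigr (fun k => z k * a k + z k * (if k == i then T else 0))); last first.
      by move=> k _; rewrite mulrDr.
    rewrite big_split /=; congr (_ + _); rewrite (bigD1 i) //= eqxx big1 ?addr0 // => k /negbTE ->.
    by rewrite mulr0.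
  have : segment a b x.
    rewrite EF; split.
      case: Da => y hy ya; exists y => // k; apply: (le_trans (ya k)).
      rewrite /x lerDl; case: eqP => _ //; rewrite /T; have := normr_ge0 (b i - a i); lra.
    by move=> y Dy; rewrite dx -hi0 mul0r addr0; exact: mina.
  case=> t /andP[t0 t1] /(_ i); rewrite /x eqxx /T => hxi.
  have h1 := ler_norm (b i - a i); have h2 := normr_ge0 (b i - a i).
  have : (0:R) < 0; last by rewrite ltxx.
  nra.
have [i0 hi0] : exists i0, a i0 != b i0.
  case: (pselect (exists i0, a i0 != b i0)) => // hne; exfalso.
  have eab : forall i, a i = b i.
    by move=> i; case: (eqVneq (a i) (b i)) => // h; case: hne; exists i.
  case: dimE1 => p [Ep ind].
  have pa : forall j i, p j i = a i.
    move=> j i; case: (Ep j) => t _ /(_ i) ->; rewrite -eab; ring.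
  have : (1:R) = 0.
    apply: (ind (fun _ => 1) _ (@ord_max 1)) => // i; apply: big1 => j _; by rewrite !pa subrr mulr0.
  by move/eqP; rewrite oner_eq0.
rewrite leNgt; apply/negP => hc.
set P := @Pts R n S.
pose pj := fun j : 'I_(size P) => nth (fun _ => 0) P j.
have [j0 hj0] : exists j : 'I_(size P), dot xi (pj j) < dot xi a.
  case: (pselect (exists j : 'I_(size P), dot xi (pj j) < dot xi a)) => // hne.
  exfalso.
  have : dot xi a <= dot xi c.
    apply: (newton_lb Dc nnxi) => j; rewrite leNgt; apply/negP => h; apply: hne.
    by exists j.
  by rewrite leNgt hc.
pose tf := fun j => (dot xi0 (pj j) - mu0) / (dot xi a - dot xi (pj j)).
have [js hjs tmin] := @argmin_ex R _ (fun j => dot xi (pj j) < dot xi a) tf j0 hj0.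
set ts := tf js.
set v := pj js.
have Dv : newton_of S v := newton_pt js.
have ts0 : 0 <= ts.
  apply: divr_ge0; first by rewrite subr_ge0; exact: mina.
  by rewrite subr_ge0 ltW.
have tsv : ts * (dot xi a - dot xi v) = dot xi0 v - mu0.
  rewrite /ts /tf /= divfK // gt_eqF // subr_gt0 //.
pose zeta := fun i => xi0 i + ts * xi i.
set M := mu0 + ts * dot xi a.
have dz : forall x, dot zeta x = dot xi0 x + ts * dot xi x.
  by move=> x; rewrite /zeta dot_lin_l.
have nnz : nonneg zeta.
  by move=> i; rewrite /zeta; apply: addr_ge0 => //; apply: mulr_ge0.
have posz : forall i, 0 < zeta i.
  move=> i; rewrite /zeta; have := pos0 i; have := mulr_ge0 ts0 (nnxi i); lra.
have hmin : forall y, newton_of S y -> M <= dot zeta y.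
  move=> y Dy; apply: (newton_lb Dy nnz) => k; rewrite dz.
  change (M <= dot xi0 (pj k) + ts * dot xi (pj k)).
  have dk : mu0 <= dot xi0 (pj k) := mina _ (newton_pt k).
  case: (ltP (dot xi (pj k)) (dot xi a)) => hk.
  - have h : ts * (dot xi a - dot xi (pj k)) <= dot xi0 (pj k) - mu0.
      by rewrite -ler_pdivlMr ?subr_gt0 //; exact: (tmin k hk).
    move: h dk hk ts0; rewrite /M; generalize (dot xi (pj k)) (dot xi0 (pj k)) => d d0.
    nra.
  - move: dk hk ts0; rewrite /M; generalize (dot xi (pj k)) (dot xi0 (pj k)) => d d0.
    nra.
have segF : forall x, segment a b x -> face (newton_of S) zeta x.
  move=> x hx; have [Dx minx] : face (newton_of S) xi0 x by rewrite -EF.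
  case: hx => t _ hx.
  have dxi : dot xi x = dot xi a by rewrite (dot_seg xi hx) -hab; ring.
  have dxi0 : dot xi0 x = mu0 by apply/eqP; rewrite eq_le minx // mina.
  split=> // y Dy; rewrite dz dxi dxi0; exact: hmin.
have Fv : face (newton_of S) zeta v.
  split=> // y Dy; rewrite dz.
  have -> : dot xi0 v + ts * dot xi v = M.
    by rewrite /M; move: tsv; rewrite mulrBr; lra.
  exact: hmin.
apply: noF; exists (face (newton_of S) zeta); split; last split.
- split; first by exists zeta.
  pose m := size P.
  pose PTm := @prod_topology 'I_m (fun _ => (R : topologicalType)).
  have Fe : face (newton_of S) zeta = (Lmap P) @`
     ([set l : PTm | forall j, `[(0:R),1]%classic (l j)] `&`
      ([set l : PTm | \sum_(j < m) l j * 1 = 1] `&`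
       [set l : PTm | \sum_(j < m) l j * dot zeta (pj j) = M])).
    apply/seteqP; split.
    - move=> x [Dx minx]; case: (Dx) => y [l [l0 [l1 ly]]] yx.
      have Dy : newton_of S y by exists y => //; exists l.
      have hxa := minx a Da; rewrite [dot zeta a]dz -/mu0 -/M in hxa.
      have hyM := hmin y Dy; have hyx := dot_le nnz yx.
      have e : forall i, x i = y i.
        have s0 : \sum_(i < n) zeta i * (x i - y i) = 0.
          have : dot zeta x - dot zeta y = 0 by lra.
          by rewrite /dot -sumrB; under eq_bigr do rewrite -mulrBr.
        have nnt : forall k : 'I_n, true -> 0 <= zeta k * (x k - y k).
          by move=> k _; apply: mulr_ge0; [exact: nnz | rewrite subr_ge0].
        have h0 := psumr_eq0P nnt s0; move=> i; have /eqP := h0 i isT.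
        by rewrite mulf_eq0 (gt_eqF (posz i)) /= subr_eq0 => /eqP.
      have dxy : dot zeta x = dot zeta y by rewrite /dot; apply: eq_bigr => i _; rewrite e.
      exists l.
        split.
          move=> j; apply/inbox; rewrite l0 /= -l1 (bigD1 j) //= lerDl.
          by apply: sumr_ge0 => k _.
        split.
          by rewrite /= (eq_bigr l) ?l1 // => j _; rewrite mulr1.
        rewrite /= -(@dot_Lmap R n zeta P l).
        have -> : dot zeta (Lmap P l) = dot zeta y.
          by rewrite /dot; apply: eq_bigr => i _; rewrite ly.
        lra.
      by apply: funext => i; rewrite e ly.
    - move=> x [l [lb [l1 lM]] <-]; split.
        exists (Lmap P l) => //; exists l; split.
          by move=> j; have /inbox /andP[] := lb j.
        split=> //; apply: (etrans _ l1); by apply: eq_bigr => j _; rewrite mulr1.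
      by move=> y Dy; rewrite dot_Lmap lM; exact: hmin.
  rewrite Fe; apply: continuous_compact.
    apply: continuous_subspaceT; apply: cont_into_prod => i.
    exact: (@cont_lin R m (fun j => pj j i)).
  apply: compact_closedI; first exact: boxc.
  apply: closedI.
    have := @preimage_closed PTm _ _ _ (in1W (@cont_lin R m (fun _ => 1))) (@closed_eq R 1).
    by [].
  have := @preimage_closed PTm _ _ _ (in1W (@cont_lin R m (fun j => dot zeta (pj j)))) (@closed_eq R M).
  by [].
- pose o1 : 'I_3 := Ordinal (isT : (1 < 3)%N).
  pose o2 : 'I_3 := Ordinal (isT : (2 < 3)%N).
  exists (fun j : 'I_3 => if val j == 0%N then a else if val j == 1%N then b else v).
  split.
    case=> [[|[|[|k]]] hk] //=; [exact: segF Ea | exact: segF Eb].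
  move=> cc H.
  have Hi : forall i, cc o1 * (b i - a i) + cc o2 * (v i - a i) = 0.
    move=> i; have := H i; rewrite !big_ord_recl big_ord0 /=.
    have -> : lift ord0 ord0 = o1 by apply: val_inj.
    have -> : lift ord0 (lift ord0 ord0) = o2 by apply: val_inj.
    by rewrite subrr mulr0 add0r addr0.
  have c2 : cc o2 = 0.
    have := dot_lin3 xi a b v (cc o1) (cc o2).
    rewrite (_ : dot xi _ = 0); last by rewrite /dot big1 // => i _; rewrite Hi mulr0.
    rewrite -hab subrr mulr0 add0r => /esym/eqP; rewrite mulf_eq0 => /orP[/eqP //|].
    by rewrite subr_eq0 => /eqP hv; move: hjs; rewrite -/v hv ltxx.
  have c1 : cc o1 = 0.
    have := Hi i0; rewrite c2 mul0r addr0 => /eqP; rewrite mulf_eq0 => /orP[/eqP //|].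
    by rewrite subr_eq0 eq_sym (negbTE hi0).
  case=> [[|[|[|k]]] hk] // _.
    by rewrite (_ : Ordinal hk = o1) //; apply: val_inj.
  by rewrite (_ : Ordinal hk = o2) //; apply: val_inj.
- exact: segF.
Qed.
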